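(* Let $(X,d)$ be a compact metric space and $f:\mathbb N\to X$ a map whose anqie entropy equals $\lambda$ with $0\le\lambda<+\infty$. Then for every $N\ge1$ there is a map $f_N:\mathbb N\to f(\mathbb N)$ with finite range such that the anqie entropy of $f_N$ is at most $\lambda$ and $\sup_n d(f_N(n),f(n))\le 1/N$. In particular, for every bounded arithmetic function $f$ with $\mathrm{AE}(f)=\lambda<\infty$ and every $N\ge1$ there is an arithmetic function $f_N$ with finite range, $\mathrm{AE}(f_N)\le\lambda$ and $\|f_N-f\|_{l^\infty}\le 1/N$.
   Context: $\mathbb N=\{0,1,2,\ldots\}$. For a compact Hausdorff space $X$ and a map $f:\mathbb N\to X$, let $X_f$ be the closure in $X^{\mathbb N}$ (product topology) of $\{(f(n),f(n+1),f(n+2),\ldots):n\in\mathbb N\}$, and let $B_f$ be the shift $(\omega_0,\omega_1,\ldots)\mapsto(\omega_1,\omega_2,\ldots)$ restricted to $X_f$. The anqie entropy of $f$ is the topological entropy $h(B_f)$. For a bounded $f:\mathbb N\to\mathbb C$ this coincides with $\mathrm{AE}(f)$, the topological entropy of the shift-induced map on the maximal ideal space of the smallest unital C*-subalgebra of $l^\infty(\mathbb N)$ containing $f$ and invariant under $(\sigma_Ag)(n)=g(n+1)$. *)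

(* Defs.v *)
From Stdlib Require Import Reals Lra List.
Open Scope R_scope.

Record is_metric {X : Type} (d : X -> X -> R) : Prop := {
  met_nonneg : forall x y, 0 <= d x y;
  met_eq : forall x y, d x y = 0 <-> x = y;
  met_sym : forall x y, d x y = d y x;
  met_tri : forall x y z, d x z <= d x y + d y z }.

Definition seq_compact {X : Type} (d : X -> X -> R) : Prop :=
  forall u : nat -> X, exists (phi : nat -> nat) (l : X),
    (forall n m, (n < m)%nat -> (phi n < phi m)%nat) /\
    (forall eps, eps > 0 -> exists N, forall n, (n >= N)%nat -> d (u (phi n)) l < eps).

(* w belongs to X_f: the closure in X^N (product topology) of the orbit
   {(f(n), f(n+1), ...) : n in N}. Basic product neighbourhoods of w are
   {w' | d(w k, w' k) < eps for all k <= K}. *)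
Definition in_Xf {X : Type} (d : X -> X -> R) (f : nat -> X) (w : nat -> X) : Prop :=
  forall eps (K : nat), eps > 0 ->
    exists n : nat, forall k, (k <= K)%nat -> d (w k) (f (n + k)%nat) < eps.

(* The product topology on X^N is metrised by
     D(w,w') = sup_k d(w k, w' k) / 2^k.
   Bowen metric for the shift B: D_n(w,w') = max_{i<n} D(B^i w, B^i w').
   "D_n(w,w') > eps" unfolds to the following. *)
Definition bowen_sep {X : Type} (d : X -> X -> R) (n : nat) (eps : R)
  (w w' : nat -> X) : Prop :=
  exists i k : nat, (i < n)%nat /\ d (w (i + k)%nat) (w' (i + k)%nat) > eps * 2 ^ k.

Definition separated_set {X : Type} (d : X -> X -> R) (f : nat -> X)
  (n : nat) (eps : R) (s : list (nat -> X)) : Prop :=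
  NoDup s /\ (forall w, In w s -> in_Xf d f w) /\
  (forall w w', In w s -> In w' s -> w <> w' -> bowen_sep d n eps w w').

(* Topological entropy (Bowen):  h(B_f) = sup_{eps>0} limsup_n (1/n) ln s(n,eps),
   s(n,eps) = maximal cardinality of an (n,eps)-separated subset of X_f.
   The anqie entropy of f is h(B_f) (a value in [0,+oo]).
   "h(B_f) <= lam" unfolds to: *)
Definition anqie_entropy_le {X : Type} (d : X -> X -> R) (f : nat -> X) (lam : R) : Prop :=
  forall eps, eps > 0 -> forall delta, delta > 0 ->
    exists N0 : nat, forall (n : nat) (s : list (nat -> X)),
      (n >= N0)%nat -> separated_set d f n eps s ->
      ln (INR (length s)) <= INR n * (lam + delta).

Definition anqie_entropy_ge {X : Type} (d : X -> X -> R) (f : nat -> X) (lam : R) : Prop :=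
  forall delta, delta > 0 -> exists eps, eps > 0 /\
    forall N0 : nat, exists (n : nat) (s : list (nat -> X)),
      (n >= N0)%nat /\ separated_set d f n eps s /\
      ln (INR (length s)) > INR n * (lam - delta).

Definition anqie_entropy_eq {X : Type} (d : X -> X -> R) (f : nat -> X) (lam : R) : Prop :=
  anqie_entropy_le d f lam /\ anqie_entropy_ge d f lam.

(* Main.v *)
Require Import Defs.
From Stdlib Require Import Reals Lra Lia List Arith ClassicalEpsilon Classical.
Open Scope R_scope.

Fixpoint Rr {X : Type} (f : nat -> X) (n : nat -> nat) (code : nat -> nat -> nat)
  (j m i : nat) : X :=
  match j with
  | O => f (m + i mod n O)%nat
  | S j' => Rr f n code j' (code j' (m + i / n j' * n j'))%nat (i mod n j')
  end.

Fixpoint Esum (eps : nat -> R) (j : nat) : R :=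
  match j with O => eps O | S j' => Esum eps j' + eps (S j') end.

Lemma divmod_eq (r m : nat) : m <> O -> r = (r / m * m + r mod m)%nat.
Proof. intro H. pose proof (Nat.div_mod_eq r m). lia. Qed.

Lemma Rr_err {X : Type} (d : X -> X -> R) (f : nat -> X) (n : nat -> nat)
  (code : nat -> nat -> nat) (eps : nat -> R) :
  is_metric d -> (forall j, (n j > 0)%nat) ->
  (forall j t i, (i < n j)%nat -> d (f (t + i)%nat) (f (code j t + i)%nat) <= eps j) ->
  forall j t r, (r < n j)%nat -> d (Rr f n code j (code j t) r) (f (t + r)%nat) <= Esum eps j.
Proof.
  intros M Hn Hc j. induction j as [|j IH]; intros t r Hr; simpl.
  - rewrite Nat.mod_small by lia. rewrite met_sym by exact M. apply Hc; exact Hr.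
  - set (m := code (S j) t).
    assert (Hnj : n j <> O) by (specialize (Hn j); lia).
    pose proof (Nat.mod_upper_bound r (n j) Hnj) as Hb.
    specialize (IH (m + r / n j * n j)%nat (r mod n j) Hb).
    assert (E : (m + r / n j * n j + r mod n j = m + r)%nat)
      by (pose proof (divmod_eq r (n j) Hnj); lia).
    rewrite E in IH.
    eapply Rle_trans. apply (met_tri d M) with (y := f (m + r)%nat).
    pose proof (Hc (S j) t r Hr) as H2. fold m in H2. rewrite (met_sym d M) in H2.
    lra.
Qed.

Lemma Rr_alpha {X : Type} (f : nat -> X) (n : nat -> nat)
  (code : nat -> nat -> nat) (reps : nat -> list nat) :
  (n O > 0)%nat -> (forall j t, In (code j t) (reps j)) ->
  forall j m i, In m (reps j) ->
   In (Rr f n code j m i) (flat_map (fun a => map (fun i => f (a + i)%nat) (seq 0 (n O))) (reps O)).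
Proof.
  intros Hn0 Hc j. induction j as [|j IH]; intros m i Hm; simpl.
  - apply in_flat_map. exists m. split; auto. apply (in_map (fun i => f (m + i)%nat)). apply in_seq.
    pose proof (Nat.mod_upper_bound i (n O)). lia.
  - apply IH. apply Hc.
Qed.

Lemma Rr_block {X : Type} (f : nat -> X) (n : nat -> nat)
  (code : nat -> nat -> nat) (reps : nat -> list nat) :
  (forall j, (n j > 0)%nat) -> (forall j, exists c, n (S j) = (n j * c)%nat) ->
  (forall j t, In (code j t) (reps j)) ->
  forall J k m q, In m (reps (J + k)%nat) -> ((q + 1) * n J <= n (J + k))%nat ->
   exists a, In a (reps J) /\ forall r, (r < n J)%nat ->
     Rr f n code (J + k) m (q * n J + r) = Rr f n code J a r.
Proof.
  intros Hn Hdiv Hc J k. induction k as [|k IH]; intros m q Hm Hq.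
  - rewrite Nat.add_0_r in *. assert (q = O) by (specialize (Hn J); nia). subst q.
    exists m. split; auto.
  - rewrite Nat.add_succ_r. simpl.
    assert (exists c, n (J + k)%nat = (n J * c)%nat) as [c Hc'].
    { clear IH Hm Hq. induction k as [|k IHk].
      - exists 1%nat. rewrite Nat.add_0_r. lia.
      - destruct IHk as [c Hc']. destruct (Hdiv (J + k)%nat) as [c2 H2].
        exists (c * c2)%nat. rewrite Nat.add_succ_r, H2, Hc'. lia. }
    assert (HnJ : n J <> O) by (specialize (Hn J); lia).
    assert (Hc0 : c <> O) by (intro; subst; specialize (Hn (J+k)%nat); lia).
    set (q1 := (q / c)%nat). set (q2 := (q mod c)%nat).
    assert (Eq : q = (q1 * c + q2)%nat) by (apply divmod_eq; auto).
    assert (Hq2 : (q2 < c)%nat) by (apply Nat.mod_upper_bound; auto).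
    destruct (IH (code (J + k) (m + q1 * n (J + k)))%nat q2) as [a [Ha Hr]].
    { apply Hc. }
    { rewrite Hc'. nia. }
    exists a. split; auto. intros r Hr0.
    assert (E1 : ((q * n J + r) / n (J + k) = q1)%nat).
    { symmetry. apply (Nat.div_unique _ _ _ (q2 * n J + r)%nat). rewrite Hc'; nia.
      rewrite Hc', Eq. nia. }
    assert (E2 : ((q * n J + r) mod n (J + k) = q2 * n J + r)%nat).
    { symmetry. apply (Nat.mod_unique _ _ q1). rewrite Hc'; nia.
      rewrite Hc', Eq. nia. }
    rewrite E1, E2. apply Hr. exact Hr0.
Qed.

Lemma n_div (n : nat -> nat) : (forall j, exists c, n (S j) = (n j * c)%nat) ->
  forall J k, exists c, n (J + k)%nat = (n J * c)%nat.
Proof.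
  intros Hdiv J k. induction k as [|k IHk].
  - exists 1%nat. rewrite Nat.add_0_r. lia.
  - destruct IHk as [c Hc']. destruct (Hdiv (J + k)%nat) as [c2 H2].
    exists (c * c2)%nat. rewrite Nat.add_succ_r, H2, Hc'. lia.
Qed.

Lemma n_mono (n : nat -> nat) : (forall j, (n j < n (S j))%nat) ->
  forall i j, (i <= j)%nat -> (n i <= n j)%nat.
Proof.
  intros H i j Hij. induction Hij. lia. specialize (H m). lia.
Qed.

Lemma lev_unique (n : nat -> nat) (lev : nat -> nat) :
  (forall j, (n j < n (S j))%nat) ->
  (forall p, ((p < n O)%nat /\ lev p = O) \/ ((n (lev p) <= p)%nat /\ (p < n (S (lev p)))%nat)) ->
  forall j p, (n j <= p)%nat -> (p < n (S j))%nat -> lev p = j.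
Proof.
  intros Hinc Hl j p H1 H2. pose proof (n_mono n Hinc) as Hm.
  destruct (Hl p) as [[H3 H4]|[H3 H4]].
  - specialize (Hm O j ltac:(lia)). lia.
  - destruct (Nat.lt_trichotomy j (lev p)) as [Hlt|[Heq|Hgt]]; auto.
    + specialize (Hm (S j) (lev p) Hlt). lia.
    + specialize (Hm (S (lev p)) j Hgt). lia.
Qed.

Definition fNdef {X : Type} (f : nat -> X) (n : nat -> nat) (code : nat -> nat -> nat)
  (lev : nat -> nat) (p : nat) : X :=
  Rr f n code (lev p) (code (lev p) (p / n (lev p) * n (lev p)))%nat (p mod n (lev p)).

Lemma fN_block {X : Type} (f : nat -> X) (n : nat -> nat)
  (code : nat -> nat -> nat) (reps : nat -> list nat) (lev : nat -> nat) :
  (forall j, (n j > 0)%nat) -> (forall j, exists c, n (S j) = (n j * c)%nat) ->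
  (forall j, (n j < n (S j))%nat) ->
  (forall p, ((p < n O)%nat /\ lev p = O) \/ ((n (lev p) <= p)%nat /\ (p < n (S (lev p)))%nat)) ->
  (forall j t, In (code j t) (reps j)) ->
  forall J q, (1 <= q)%nat -> exists a, In a (reps J) /\ forall r, (r < n J)%nat ->
     fNdef f n code lev (q * n J + r) = Rr f n code J a r.
Proof.
  intros Hn Hdiv Hinc Hl Hc J q Hq.
  pose proof (n_mono n Hinc) as Hm.
  set (j := lev (q * n J)%nat).
  assert (HJ : (J <= j)%nat).
  { unfold j. destruct (Hl (q * n J)%nat) as [[H3 H4]|[H3 H4]].
    - specialize (Hm O J ltac:(lia)). nia.
    - destruct (le_lt_dec J (lev (q * n J)%nat)) as [h|h]; auto.
      specialize (Hm (S (lev (q * n J)%nat)) J h). nia. }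
  assert (Hj1 : (n j <= q * n J)%nat /\ (q * n J < n (S j))%nat).
  { unfold j. destruct (Hl (q * n J)%nat) as [[H3 H4]|[H3 H4]].
    - specialize (Hm O J ltac:(lia)). nia.
    - auto. }
  destruct (n_div n Hdiv J (S j - J)) as [c' Hc'].
  replace (J + (S j - J))%nat with (S j) in Hc' by lia.
  destruct (n_div n Hdiv J (j - J)) as [c Hcc].
  replace (J + (j - J))%nat with j in Hcc by lia.
  assert (HnJ : n J <> O) by (specialize (Hn J); lia).
  assert (Hc0 : c <> O) by (intro; subst; specialize (Hn j); lia).
  set (q1 := (q / c)%nat). set (q2 := (q mod c)%nat).
  assert (Eq : q = (q1 * c + q2)%nat) by (apply divmod_eq; auto).
  assert (Hq2 : (q2 < c)%nat) by (apply Nat.mod_upper_bound; auto).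
  destruct (Rr_block f n code reps Hn Hdiv Hc J (j - J) (code j (q1 * n j))%nat q2) as [a [Ha Hr]].
  { replace (J + (j - J))%nat with j by lia. apply Hc. }
  { replace (J + (j - J))%nat with j by lia. rewrite Hcc. nia. }
  replace (J + (j - J))%nat with j in Hr by lia.
  exists a. split; auto. intros r Hr0.
  unfold fNdef.
  assert (Hlev : lev (q * n J + r)%nat = j).
  { apply (lev_unique n lev Hinc Hl). lia.
    destruct Hj1 as [_ H2]. rewrite Hc' in H2 |- *.
    assert (q < c')%nat by nia. nia. }
  rewrite Hlev.
  assert (E1 : ((q * n J + r) / n j = q1)%nat).
  { symmetry. apply (Nat.div_unique _ _ _ (q2 * n J + r)%nat). rewrite Hcc; nia.
    rewrite Hcc, Eq. nia. }
  assert (E2 : ((q * n J + r) mod n j = q2 * n J + r)%nat).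
  { symmetry. apply (Nat.mod_unique _ _ q1). rewrite Hcc; nia.
    rewrite Hcc, Eq. nia. }
  rewrite E1, E2. apply Hr. exact Hr0.
Qed.

Lemma divmod_eq' (r m : nat) : m <> O -> r = (r / m * m + r mod m)%nat.
Proof. intro H. pose proof (Nat.div_mod_eq r m). lia. Qed.

Fixpoint allL (A : list nat) (B : nat) : list (list nat) :=
  match B with
  | O => nil :: nil
  | S B' => flat_map (fun a => map (cons a) (allL A B')) A
  end.

Lemma allL_length A B : length (allL A B) = (length A ^ B)%nat.
Proof.
  induction B as [|B IH]; simpl; auto.
  rewrite <- IH. generalize (allL A B) as Ls. intro Ls. clear IH.
  induction A as [|a A IHA]; simpl; auto.
  rewrite length_app, length_map, IHA. lia.
Qed.

Lemma allL_in A B : forall l, length l = B -> (forall y, In y l -> In y A) -> In l (allL A B).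
Proof.
  induction B as [|B IH]; intros l Hl HA.
  - destruct l; simpl in *; [auto|lia].
  - destruct l as [|a l]; simpl in *; [lia|].
    apply in_flat_map. exists a. split; auto.
    apply in_map. apply IH; auto.
Qed.

Lemma fin_choice (P : nat -> nat -> Prop) : (forall b, exists a, P b a) ->
  forall B start, exists l, length l = B /\ forall b, (b < B)%nat -> P (start + b)%nat (nth b l O).
Proof.
  intros H B. induction B as [|B IH]; intros start.
  - exists nil. split; auto. intros; lia.
  - destruct (H start) as [a Ha]. destruct (IH (S start)) as [l [Hl Hp]].
    exists (a :: l). split. simpl; lia.
    intros b Hb. destruct b as [|b]. rewrite Nat.add_0_r. exact Ha.
    simpl. replace (start + S b)%nat with (S start + b)%nat by lia. apply Hp. lia.
Qed.

Lemma closure_bound {X : Type} (d : X -> X -> R) (g : nat -> X) (F : list X) (Dm : R) :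
  is_metric d -> (forall p, In (g p) F) -> (forall a b, In a F -> In b F -> d a b <= Dm) ->
  forall w w', in_Xf d g w -> in_Xf d g w' -> forall x, d (w x) (w' x) <= Dm.
Proof.
  intros M HF HD w w' Hw Hw' x.
  apply Rnot_lt_le. intro Hlt.
  set (e := (d (w x) (w' x) - Dm) / 3).
  assert (He : e > 0) by (unfold e; lra).
  destruct (Hw e x He) as [p Hp]. destruct (Hw' e x He) as [p' Hp'].
  specialize (Hp x (Nat.le_refl x)). specialize (Hp' x (Nat.le_refl x)).
  pose proof (HD _ _ (HF (p + x)%nat) (HF (p' + x)%nat)).
  pose proof (met_tri d M (w x) (g (p + x)%nat) (w' x)).
  pose proof (met_tri d M (g (p + x)%nat) (g (p' + x)%nat) (w' x)).
  rewrite (met_sym d M (g (p' + x)%nat)) in H1.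
  unfold e in *. lra.
Qed.

Lemma count_sep {X : Type} (d : X -> X -> R) (g : nat -> X) (F : list X) (Dm : R)
  (nJ : nat) (A : list nat) (Blk : nat -> nat -> X) :
  is_metric d -> (forall p, In (g p) F) -> (forall a b, In a F -> In b F -> d a b <= Dm) ->
  (nJ > 0)%nat ->
  (forall q, (1 <= q)%nat -> exists a, In a A /\ forall r, (r < nJ)%nat -> g (q * nJ + r)%nat = Blk a r) ->
  forall eps K n s, eps > 0 -> Dm < eps * 2 ^ K -> separated_set d g n eps s ->
  (length s <= nJ + nJ * length A ^ ((n + K) / nJ + 2))%nat.
Proof.
  intros M HF HD HnJ Hblk eps K n s Heps HK [Hnd [Hin Hsep]].
  set (L := (n + K)%nat).
  set (B := (L / nJ + 2)%nat).
  assert (Hch : forall w, exists p, In w s -> forall k, (k <= L)%nat -> d (w k) (g (p + k)%nat) < eps / 2).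
  { intro w. destruct (classic (In w s)) as [h|h].
    - destruct (Hin w h (eps / 2) L ltac:(lra)) as [p Hp]. exists p; auto.
    - exists O. intro; contradiction. }
  set (P := fun w => proj1_sig (constructive_indefinite_description _ (Hch w))).
  assert (HP : forall w, In w s -> forall k, (k <= L)%nat -> d (w k) (g (P w + k)%nat) < eps / 2).
  { intro w. unfold P. destruct (constructive_indefinite_description _ (Hch w)). auto. }
  set (W := fun p => map (fun x => g (p + x)%nat) (seq 0 L)).
  set (Desc := fun oa : nat * list nat =>
    map (fun x => Blk (nth ((fst oa + x) / nJ) (snd oa) O) ((fst oa + x) mod nJ)) (seq 0 L)).
  set (Words := map W (seq 0 nJ) ++ map Desc (list_prod (seq 0 nJ) (allL A B))).
  assert (HW : forall p, In (W p) Words).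
  { intro p. unfold Words. apply in_or_app. destruct (lt_dec p nJ) as [h|h].
    - left. apply in_map. apply in_seq. lia.
    - right. set (q := (p / nJ)%nat). set (o := (p mod nJ)%nat).
      assert (HnJ0 : nJ <> O) by lia.
      assert (Ep : p = (q * nJ + o)%nat) by (apply divmod_eq'; auto).
      assert (Hq1 : (1 <= q)%nat).
      { destruct q as [|q']. simpl in Ep. pose proof (Nat.mod_upper_bound p nJ HnJ0). fold o in H. lia. lia. }
      destruct (fin_choice (fun b a => In a A /\ forall r, (r < nJ)%nat -> g ((q + b) * nJ + r)%nat = Blk a r)
        ltac:(intro b; apply Hblk; lia) B O) as [as_ [Hl Has]].
      simpl in Has.
      apply in_map_iff. exists (o, as_). split.
      + unfold Desc, W. simpl. apply map_ext_in. intros x Hx. apply in_seq in Hx.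
        set (b := ((o + x) / nJ)%nat). set (r := ((o + x) mod nJ)%nat).
        assert (Eox : (o + x = b * nJ + r)%nat) by (apply divmod_eq'; auto).
        assert (Hr : (r < nJ)%nat) by (apply Nat.mod_upper_bound; auto).
        assert (Hb : (b < B)%nat).
        { unfold b, B. assert (o < nJ)%nat by (apply Nat.mod_upper_bound; auto).
          assert ((o + x) / nJ <= (1 * nJ + L) / nJ)%nat by (apply Nat.Div0.div_le_mono; lia).
          rewrite Nat.div_add_l in H0 by auto. lia. }
        destruct (Has b Hb) as [_ Hg]. rewrite <- Hg by exact Hr. f_equal. nia.
      + apply in_prod. apply in_seq. pose proof (Nat.mod_upper_bound p nJ HnJ0). fold o in H. lia.
        apply allL_in; auto. intros y Hy. destruct (In_nth _ _ O Hy) as [b [Hb Hnth]].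
        rewrite <- Hnth. apply Has. lia. }
  assert (Hlen : (length (map (fun w => W (P w)) s) <= length Words)%nat).
  { apply NoDup_incl_length.
    - apply NoDup_map_NoDup_ForallPairs; auto.
      intros w w' Hw Hw' Heq. destruct (classic (w = w')) as [h|h]; auto. exfalso.
      destruct (Hsep w w' Hw Hw' h) as [i [k [Hi Hd]]].
      destruct (lt_dec k K) as [hk|hk].
      + set (x := (i + k)%nat) in *.
        assert (HxL : In x (seq 0 L)) by (apply in_seq; unfold x, L; lia).
        pose proof (ext_in_map Heq x HxL) as Ex. simpl in Ex.
        pose proof (HP w Hw x ltac:(unfold x, L; lia)).
        pose proof (HP w' Hw' x ltac:(unfold x, L; lia)).
        pose proof (met_tri d M (w x) (g (P w + x)%nat) (w' x)).
        rewrite Ex in H1. rewrite (met_sym d M (g (P w' + x)%nat)) in H1.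
        rewrite Ex in H. assert (Hlt : d (w x) (w' x) < eps) by lra.
        pose proof (pow_R1_Rle 2 k ltac:(lra)).
        assert (eps <= eps * 2 ^ k) by nra. lra.
      + pose proof (closure_bound d g F Dm M HF HD w w' (Hin w Hw) (Hin w' Hw') (i + k)%nat).
        pose proof (Rle_pow 2 K k ltac:(lra) ltac:(lia)).
        assert (eps * 2 ^ K <= eps * 2 ^ k) by (apply Rmult_le_compat_l; lra). lra.
    - intros y Hy. apply in_map_iff in Hy. destruct Hy as [w [<- _]]. apply HW. }
  rewrite length_map in Hlen. unfold Words in Hlen.
  rewrite length_app, !length_map, length_prod, length_seq, allL_length in Hlen.
  exact Hlen.
Qed.

Definition orbit {X : Type} (f : nat -> X) (m : nat) : nat -> X := fun k => f (m + k)%nat.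

Lemma max_nat (P : nat -> Prop) (B : nat) : P O -> (forall k, P k -> (k <= B)%nat) ->
  exists k, P k /\ forall k', P k' -> (k' <= k)%nat.
Proof.
  intros H0 HB.
  set (Q := fun m => exists k, P k /\ (m <= k)%nat).
  assert (Hst : forall B', Q O -> ~ Q (S B') -> exists m, Q m /\ ~ Q (S m)).
  { induction B' as [|B' IH]; intros HQ0 HQn.
    - exists O; auto.
    - destruct (classic (Q (S B'))) as [h|h]. exists (S B'); auto. apply IH; auto. }
  destruct (Hst B) as [m [[k [Hk Hmk]] Hn]].
  - exists O; split; auto; lia.
  - intros [k [Hk Hl]]. specialize (HB k Hk). lia.
  - exists k. split; auto. intros k' Hk'.
    assert (k <= m)%nat. { destruct (le_lt_dec k m); auto. exfalso. apply Hn. exists k; split; auto. }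
    destruct (le_lt_dec k' m); try lia. exfalso. apply Hn. exists k'; split; auto.
Qed.

Lemma max_sep {X : Type} (d : X -> X -> R) (f : nat -> X) (n : nat) (e : R) (Bn : nat) :
  is_metric d -> e > 0 ->
  (forall l, separated_set d f n e (map (orbit f) l) -> (length l <= Bn)%nat) ->
  exists l, separated_set d f n e (map (orbit f) l) /\
    forall t, exists a, In a l /\ forall i, (i < n)%nat -> d (f (t + i)%nat) (f (a + i)%nat) <= e.
Proof.
  intros M He HB.
  destruct (max_nat (fun k => exists l, separated_set d f n e (map (orbit f) l) /\ length l = k) Bn)
    as [k [[l [Hl Hlen]] Hmax]].
  - exists nil. split; auto. split. constructor. split; simpl; tauto.
  - intros k [l [Hl Hlen]]. subst. auto.
  - exists l. split; auto. intro t.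
    destruct (classic (exists a, In a l /\ forall i, (i < n)%nat -> d (f (t + i)%nat) (f (a + i)%nat) <= e)) as [h|h]; auto.
    exfalso.
    assert (Hs : forall a, In a l -> exists i, (i < n)%nat /\ d (f (t + i)%nat) (f (a + i)%nat) > e).
    { intros a Ha. apply NNPP. intro h2. apply h. exists a. split; auto. intros i Hi.
      apply Rnot_lt_le. intro h3. apply h2. exists i. split; auto. }
    assert (Hbs : forall a, In a l -> bowen_sep d n e (orbit f t) (orbit f a) /\ bowen_sep d n e (orbit f a) (orbit f t)).
    { intros a Ha. destruct (Hs a Ha) as [i [Hi Hd]]. split; exists i, O; split; auto;
      unfold orbit; rewrite !Nat.add_0_r; simpl; rewrite Rmult_1_r; auto.
      rewrite (met_sym d M). auto. }
    assert (Hsl : separated_set d f n e (map (orbit f) (t :: l))).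
    { destruct Hl as [Hnd [Hin Hsep]]. split; [|split].
      - simpl. constructor; auto. intro Hi. apply in_map_iff in Hi. destruct Hi as [a [Ha Hal]].
        destruct (Hs a Hal) as [i [_ Hd]]. unfold orbit in Ha.
        assert (f (a + i)%nat = f (t + i)%nat) by (change ((fun k => f (a + k)%nat) i = (fun k => f (t + k)%nat) i); rewrite Ha; auto).
        rewrite H in Hd. rewrite (proj2 (met_eq d M _ _) eq_refl) in Hd. lra.
      - intros w Hw. simpl in Hw. destruct Hw as [<-|Hw]; auto.
        intros eps K Heps. exists t. intros kk _. unfold orbit.
        rewrite (proj2 (met_eq d M _ _) eq_refl). lra.
      - intros w w' Hw Hw' Hne. simpl in Hw, Hw'.
        destruct Hw as [<-|Hw]; destruct Hw' as [<-|Hw'].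
        + contradiction.
        + apply in_map_iff in Hw'. destruct Hw' as [a [<- Ha]]. apply Hbs; auto.
        + apply in_map_iff in Hw. destruct Hw as [a [<- Ha]]. apply Hbs; auto.
        + apply Hsep; auto. }
    assert (HS : (S k <= k)%nat).
    { apply Hmax. exists (t :: l). split; auto. simpl. lia. }
    lia.
Qed.

Lemma ln_le' x y : 0 < x -> x <= y -> ln x <= ln y.
Proof. intros Hx Hxy. destruct (Rle_lt_or_eq_dec _ _ Hxy) as [h|h].
  left. apply ln_increasing; auto. subst; lra. Qed.

Lemma len_bound (lam dl : R) (m : nat) : exists Bn : nat, forall len : nat,
  ln (INR len) <= INR m * (lam + dl) -> (len <= Bn)%nat.
Proof.
  destruct (INR_archimed 1 (exp (INR m * (lam + dl))) ltac:(lra)) as [Bn HBn].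
  exists Bn. intros len Hl. destruct (le_lt_dec len Bn) as [h|h]; auto. exfalso.
  apply lt_INR in h. rewrite Rmult_1_r in HBn.
  assert (ln (exp (INR m * (lam + dl))) < ln (INR len)) by (apply ln_increasing; [apply exp_pos|lra]).
  rewrite ln_exp in H. lra.
Qed.

Fixpoint nseq (N0 : nat -> nat) (j : nat) : nat :=
  match j with O => S (N0 O) | S j' => (nseq N0 j' * S (S (N0 (S j'))))%nat end.

Lemma nseq_props (N0 : nat -> nat) :
  (forall j, (nseq N0 j > 0)%nat) /\ (forall j, (N0 j <= nseq N0 j)%nat) /\
  (forall j, (nseq N0 j < nseq N0 (S j))%nat) /\
  (forall j, exists c, nseq N0 (S j) = (nseq N0 j * c)%nat).
Proof.
  assert (Hp : forall j, (nseq N0 j > 0)%nat).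
  { induction j; simpl; nia. }
  split; [auto|split; [|split]].
  - intro j; destruct j; simpl. lia. specialize (Hp j). nia.
  - intro j; simpl. specialize (Hp j). nia.
  - intro j. exists (S (S (N0 (S j)))). reflexivity.
Qed.

Lemma lev_ex (n : nat -> nat) : (forall j, (n j < n (S j))%nat) ->
  forall p, exists j, ((p < n O)%nat /\ j = O) \/ ((n j <= p)%nat /\ (p < n (S j))%nat).
Proof.
  intros Hinc p. destruct (lt_dec p (n O)) as [h|h]. exists O; auto.
  assert (Hgr : forall j, (j <= n j)%nat) by (induction j; [lia| specialize (Hinc j); lia]).
  assert (forall m, (p < n m)%nat -> exists j, (n j <= p)%nat /\ (p < n (S j))%nat).
  { induction m as [|m IH]; intro Hm. lia. destruct (lt_dec p (n m)) as [h2|h2]; auto.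
    exists m. lia. }
  destruct (H (S p)) as [j Hj]. specialize (Hgr (S p)). specialize (Hinc p). 
  specialize (Hgr). pose proof (Hinc). lia.
  exists j. auto.
Qed.

Lemma Rr_f {X : Type} (f : nat -> X) n code : forall j m i, exists x, Rr f n code j m i = f x.
Proof. induction j; intros m i; simpl. eauto. apply IHj. Qed.

Lemma fin_diam {X : Type} (d : X -> X -> R) (F : list X) : is_metric d ->
  exists Dm, forall a b, In a F -> In b F -> d a b <= Dm.
Proof.
  intro M. destruct F as [|a0 F']. exists 0. simpl; tauto.
  set (Sm := fold_right Rplus 0 (map (d a0) (a0 :: F'))).
  assert (HS : forall b, In b (a0 :: F') -> d a0 b <= Sm).
  { unfold Sm. generalize (a0 :: F'). induction l as [|x l IH]; simpl. tauto.
    intros b [<-|Hb].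
    - assert (0 <= fold_right Rplus 0 (map (d a0) l)).
      { clear IH. induction l; simpl. lra. pose proof (met_nonneg d M a0 a). lra. }
      lra.
    - specialize (IH b Hb). pose proof (met_nonneg d M a0 x). lra. }
  exists (2 * Sm). intros a b Ha Hb.
  pose proof (met_tri d M a a0 b). rewrite (met_sym d M a a0) in H.
  pose proof (HS a Ha). pose proof (HS b Hb). lra.
Qed.

Lemma ln_0 : ln 0 = 0.
Proof. unfold ln. destruct (Rlt_dec 0 0) as [h|h]. exfalso; apply (Rlt_irrefl 0 h). reflexivity. Qed.

Lemma pow2_ge (K : nat) : INR K <= 2 ^ K.
Proof. induction K. simpl; lra. rewrite S_INR. simpl. pose proof (pow_R1_Rle 2 K ltac:(lra)). lra. Qed.

Lemma final_ineq (len c M B m K : nat) (lam dJ delta : R) :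
  (len <= c + c * M ^ B)%nat -> (c > 0)%nat -> (M > 0)%nat -> (B * c <= m + K + 2 * c)%nat ->
  0 <= lam -> 0 <= dJ -> dJ <= delta / 2 ->
  ln (INR M) <= INR c * (lam + dJ) ->
  ln 2 + ln (INR c) + (INR K + 2 * INR c) * (lam + dJ) <= INR m * (delta / 2) ->
  ln (INR len) <= INR m * (lam + delta).
Proof.
  intros Hlen Hc HM HB Hlam HdJ HdJd HlnM Hm.
  assert (Hm0 : 0 <= INR m) by apply pos_INR.
  destruct len as [|len].
  { simpl. rewrite ln_0. nra. }
  assert (HcR : 0 < INR c) by (apply lt_0_INR; lia).
  assert (HMR : 1 <= INR M) by (apply (le_INR 1); lia).
  assert (HMB : 1 <= INR M ^ B) by (apply pow_R1_Rle; auto).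
  assert (H1 : ln (INR (S len)) <= ln (2 * INR c * INR M ^ B)).
  { apply ln_le'. apply lt_0_INR; lia. apply le_INR in Hlen.
    rewrite plus_INR, mult_INR, pow_INR in Hlen. nra. }
  rewrite ln_mult, ln_mult, ln_pow in H1 by (try apply pow_lt; nra).
  assert (HBc : INR B * INR c <= INR m + INR K + 2 * INR c).
  { apply le_INR in HB. rewrite mult_INR, !plus_INR, mult_INR in HB. simpl in HB. lra. }
  assert (HB0 : 0 <= INR B) by apply pos_INR.
  assert (INR B * ln (INR M) <= INR B * (INR c * (lam + dJ))) by (apply Rmult_le_compat_l; auto).
  assert (INR B * (INR c * (lam + dJ)) <= (INR m + INR K + 2 * INR c) * (lam + dJ)).
  { rewrite <- Rmult_assoc. apply Rmult_le_compat_r; lra. }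
  nra.
Qed.

Theorem theorem6p3 (X : Type) (d : X -> X -> R) (f : nat -> X) (lam : R) :
  is_metric d -> seq_compact d ->
  0 <= lam -> anqie_entropy_eq d f lam ->
  forall N : nat, (N >= 1)%nat ->
    exists fN : nat -> X,
      (forall n, exists m, fN n = f m) /\
      (exists L : list X, forall n, In (fN n) L) /\
      anqie_entropy_le d fN lam /\
      (forall n, d (fN n) (f n) <= / INR N).
Proof.
  intros M _ Hlam [Hle _] N HN.
  assert (HNR : 0 < INR N) by (apply lt_0_INR; lia).
  set (eps := fun j : nat => / INR N * (/ 2) ^ (S j)).
  set (dl := fun j : nat => / INR (S j)).
  assert (Heps : forall j, eps j > 0).
  { intro j. unfold eps. apply Rmult_lt_0_compat. apply Rinv_0_lt_compat; auto.
    apply pow_lt. lra. }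
  assert (Hdl : forall j, dl j > 0).
  { intro j. unfold dl. apply Rinv_0_lt_compat. apply lt_0_INR; lia. }
  assert (HN0 : forall j, exists N0 : nat, forall (m : nat) (s : list (nat -> X)),
      (m >= N0)%nat -> separated_set d f m (eps j) s ->
      ln (INR (length s)) <= INR m * (lam + dl j)).
  { intro j. apply Hle; auto. }
  set (N0 := fun j => proj1_sig (constructive_indefinite_description _ (HN0 j))).
  assert (HN0p : forall j (m : nat) (s : list (nat -> X)),
      (m >= N0 j)%nat -> separated_set d f m (eps j) s ->
      ln (INR (length s)) <= INR m * (lam + dl j)).
  { intro j. unfold N0. destruct (constructive_indefinite_description _ (HN0 j)). auto. }
  set (n := nseq N0).
  destruct (nseq_props N0) as [Hn [HnN0 [Hinc Hdiv]]]. fold n in Hn, HnN0, Hinc, Hdiv.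
  assert (Hrep : forall j, exists l, separated_set d f (n j) (eps j) (map (orbit f) l) /\
    forall t, exists a, In a l /\ forall i, (i < n j)%nat -> d (f (t + i)%nat) (f (a + i)%nat) <= eps j).
  { intro j. destruct (len_bound lam (dl j) (n j)) as [Bn HBn].
    apply (max_sep d f (n j) (eps j) Bn M (Heps j)).
    intros l Hl. apply HBn. rewrite <- (length_map (orbit f)). apply HN0p; auto. }
  set (reps := fun j => proj1_sig (constructive_indefinite_description _ (Hrep j))).
  assert (Hreps : forall j, separated_set d f (n j) (eps j) (map (orbit f) (reps j)) /\
    forall t, exists a, In a (reps j) /\ forall i, (i < n j)%nat -> d (f (t + i)%nat) (f (a + i)%nat) <= eps j).
  { intro j. unfold reps. destruct (constructive_indefinite_description _ (Hrep j)). auto. }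
  set (code := fun j t => proj1_sig (constructive_indefinite_description _ (proj2 (Hreps j) t))).
  assert (Hcode : forall j t, In (code j t) (reps j) /\
     forall i, (i < n j)%nat -> d (f (t + i)%nat) (f (code j t + i)%nat) <= eps j).
  { intros j t. unfold code. destruct (constructive_indefinite_description _ (proj2 (Hreps j) t)). auto. }
  set (lev := fun p => proj1_sig (constructive_indefinite_description _ (lev_ex n Hinc p))).
  assert (Hlev : forall p, ((p < n O)%nat /\ lev p = O) \/ ((n (lev p) <= p)%nat /\ (p < n (S (lev p)))%nat)).
  { intro p. unfold lev. destruct (constructive_indefinite_description _ (lev_ex n Hinc p)) as [j Hj].
    simpl. destruct Hj as [[h1 h2]|h]; auto. }
  assert (Hc1 : forall j t, In (code j t) (reps j)) by (intros; apply Hcode).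
  exists (fNdef f n code lev).
  split; [|split; [|split]].
  - intro p. unfold fNdef. apply Rr_f.
  - exists (flat_map (fun a => map (fun i => f (a + i)%nat) (seq 0 (n O))) (reps O)).
    intro p. unfold fNdef. apply Rr_alpha; auto.
  - intros e He delta Hdelta.
    set (F := flat_map (fun a => map (fun i => f (a + i)%nat) (seq 0 (n O))) (reps O)).
    assert (HF : forall p, In (fNdef f n code lev p) F).
    { intro p. unfold fNdef. apply Rr_alpha; auto. }
    destruct (fin_diam d F M) as [Dm HD].
    destruct (INR_archimed e Dm He) as [K HK].
    assert (HKe : Dm < e * 2 ^ K).
    { pose proof (pow2_ge K). nra. }
    destruct (INR_archimed (delta / 2) 1 ltac:(lra)) as [J HJ].
    assert (HdlJ : dl J <= delta / 2).
    { unfold dl. rewrite S_INR. assert (0 <= INR J) by apply pos_INR.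
      apply (Rmult_le_reg_l (INR J + 1)). lra. rewrite Rinv_r by lra. nra. }
    set (c := n J). set (Mr := length (reps J)).
    assert (HlnM : ln (INR Mr) <= INR c * (lam + dl J)).
    { unfold Mr. rewrite <- (length_map (orbit f)). apply HN0p. apply HnN0. apply Hreps. }
    assert (HMr : (Mr > 0)%nat).
    { unfold Mr. destruct (reps J) eqn:E. pose proof (Hc1 J O). rewrite E in H. destruct H.
      simpl; lia. }
    set (C := ln 2 + ln (INR c) + (INR K + 2 * INR c) * (lam + dl J)).
    destruct (INR_archimed (delta / 2) C ltac:(lra)) as [N1 HN1].
    exists N1. intros m s Hm Hs.
    pose proof (count_sep d (fNdef f n code lev) F Dm c (reps J) (Rr f n code J) M HF HD (Hn J)
      (fN_block f n code reps lev Hn Hdiv Hinc Hlev Hc1 J) e K m s He HKe Hs) as Hcnt.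
    assert (Hc0 : c <> O) by (specialize (Hn J); unfold c; lia).
    assert (HBc : (((m + K) / c + 2) * c <= m + K + 2 * c)%nat).
    { pose proof (Nat.Div0.mul_div_le (m + K) c). nia. }
    assert (Hd0 : 0 <= dl J) by (left; apply Hdl).
    assert (HC : C <= INR m * (delta / 2)).
    { apply le_INR in Hm. nra. }
    apply (final_ineq (length s) c Mr ((m + K) / c + 2) m K lam (dl J) delta Hcnt
      ltac:(unfold c; apply Hn) HMr HBc Hlam Hd0 HdlJ HlnM HC).
  - intro p. unfold fNdef.
    set (j := lev p).
    assert (Hnj : n j <> O) by (specialize (Hn j); lia).
    pose proof (Rr_err d f n code eps M Hn (fun j t i Hi => proj2 (Hcode j t) i Hi) j
      (p / n j * n j)%nat (p mod n j) (Nat.mod_upper_bound p (n j) Hnj)) as He.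
    rewrite <- (divmod_eq p (n j) Hnj) in He.
    eapply Rle_trans. exact He.
    assert (HE : forall j, Esum eps j = / INR N * (1 - (/ 2) ^ (S j))).
    { induction j0; simpl. unfold eps. simpl. lra.
      rewrite IHj0. unfold eps. simpl. lra. }
    rewrite HE. assert (0 < (/2) ^ (S j)) by (apply pow_lt; lra).
    assert (0 < / INR N) by (apply Rinv_0_lt_compat; auto). nra.
Qed.
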